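(* Let $p\in\mathbb{N}$, $\eta>0$ and write $x=\cosh\eta$. Then \[ \sum_{k=-p}^{p-1}\frac{(-1)^{k+1}e^{k\eta}R_p^k(x)}{p-k} =p!\,e^{p\eta}\sinh^p\eta\left\{\frac{(-1)^p}{(2p)!}\bigl[\psi(2p+1)-\psi(1)\bigr]P_p^p(\coth\eta)+\sum_{k=0}^{p-1}\frac{(-1)^k(2k+1)}{(p-k)(p+k+1)}P_k^{-p}(\coth\eta)\right\}. \]
   Context: $\psi$ is the digamma function. For $z>1$, $P_p^p(z)=(z^2-1)^{p/2}\frac{d^p}{dz^p}P_p(z)$ with $P_p$ the Legendre polynomial; for integers $k\ge0$, $m\ge1$, $P_k^{-m}(z)=\frac{1}{m!}\left(\frac{z-1}{z+1}\right)^{m/2}{}_2F_1\!\left(-k,k+1;1+m;\frac{1-z}{2}\right)$. The logarithmic polynomials $R_p^k(x)$, $p\in\mathbb{N}_0$, $k\in\mathbb{Z}$, are defined by $R_0^0(x)=1$, $R_0^k(x)=0$ for $k\ne0$, and $R_p^k(x)=\tfrac12 R_{p-1}^{k-1}(x)+xR_{p-1}^k(x)+\tfrac12 R_{p-1}^{k+1}(x)$ for $p\ge1$. *)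

(* Defs.v *)
From Stdlib Require Import Reals ZArith List.
From Coquelicot Require Import Coquelicot.
Open Scope R_scope.

(* Sum over integers a <= k <= b (empty if b < a). *)
Definition sumZ (a b : Z) (f : Z -> R) : R :=
  fold_right Rplus 0
    (map (fun i : nat => f (a + Z.of_nat i)%Z) (seq 0 (Z.to_nat (b - a + 1)))).

Definition euler_gamma : R :=
  real (Lim_seq (fun n => sum_n_m (fun k => / INR k) 1 n - ln (INR n))).

Definition digamma (z : R) : R :=
  - euler_gamma + Series (fun n => / (INR n + 1) - / (INR n + z)).

Fixpoint poch (a : R) (n : nat) : R :=
  match n with O => 1 | S m => poch a m * (a + INR m) end.

Definition hyp2F1 (a b c z : R) : R :=
  Series (fun n => poch a n * poch b n / (poch c n * INR (fact n)) * z ^ n).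

(* Legendre polynomial P_n(x) = 2F1(-n, n+1; 1; (1-x)/2)
   = sum_k C(n,k) C(n+k,k) ((x-1)/2)^k. *)
Definition legendreP (n : nat) (x : R) : R :=
  sum_n (fun k => Binomial.C n k * Binomial.C (n + k) k
                   * ((x - 1) / 2) ^ k) n.

Definition assocP_pp (p : nat) (z : R) : R :=
  Rpower (z ^ 2 - 1) (INR p / 2) * Derive_n (legendreP p) p z.

Definition assocP_neg (k m : nat) (z : R) : R :=
  / INR (fact m) * Rpower ((z - 1) / (z + 1)) (INR m / 2)
  * hyp2F1 (- INR k) (INR k + 1) (1 + INR m) ((1 - z) / 2).

Fixpoint logR (p : nat) (k : Z) (x : R) : R :=
  match p with
  | O => if Z.eqb k 0 then 1 else 0
  | S q => / 2 * logR q (k - 1)%Z x + x * logR q k x + / 2 * logR q (k + 1)%Z x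
  end.

(* Main.v *)
Require Import Defs.
From Stdlib Require Import Reals ZArith List Lia Lra.
From Coquelicot Require Import Coquelicot.
Open Scope R_scope.

Fixpoint sn (f : nat -> R) (n : nat) : R :=
  match n with O => 0 | S m => sn f m + f m end.

Lemma sn_ext f g n : (forall i, (i < n)%nat -> f i = g i) -> sn f n = sn g n.
Proof.
  induction n; intros H; simpl; auto.
  rewrite IHn, H; auto; intros; apply H; lia.
Qed.

Lemma sn_zero f n : (forall i, (i < n)%nat -> f i = 0) -> sn f n = 0.
Proof.
  intros H; rewrite (sn_ext f (fun _ => 0)); auto.
  induction n; simpl; auto. rewrite IHn; [lra|]. intros; auto.
Qed.

Lemma sn_plus f g n : sn (fun i => f i + g i) n = sn f n + sn g n.
Proof. induction n; simpl; [lra|]. rewrite IHn; lra. Qed.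

Lemma sn_scal c f n : sn (fun i => c * f i) n = c * sn f n.
Proof. induction n; simpl; [lra|]. rewrite IHn; lra. Qed.

Lemma sn_shift f n : sn f (S n) = f O + sn (fun i => f (S i)) n.
Proof. induction n; simpl in *; [lra|]. rewrite IHn; lra. Qed.

Lemma sn_split f a b : sn f (a + b) = sn f a + sn (fun i => f (a + i)%nat) b.
Proof.
  induction b; simpl. rewrite Nat.add_0_r; lra.
  rewrite Nat.add_succ_r; simpl; rewrite IHb; lra.
Qed.

Lemma sn_rev f n : sn f n = sn (fun i => f (n - S i)%nat) n.
Proof.
  induction n; auto.
  rewrite (sn_shift (fun i => f (S n - S i)%nat)). simpl sn.
  replace (n - 0)%nat with n by lia.
  rewrite IHn. rewrite Rplus_comm. f_equal; try (apply sn_ext; intros); f_equal; lia.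
Qed.

Lemma sn_swap (g : nat -> nat -> R) n m :
  sn (fun i => sn (fun j => g i j) m) n = sn (fun j => sn (fun i => g i j) n) m.
Proof.
  induction n; simpl.
  - symmetry; apply sn_zero; auto.
  - rewrite IHn, <- sn_plus. reflexivity.
Qed.

Lemma fold_sn (g : nat -> R) s n :
  fold_right Rplus 0 (map g (seq s n)) = sn (fun i => g (s + i)%nat) n.
Proof.
  revert s; induction n; intros s; [simpl; auto|].
  rewrite sn_shift. cbn [seq map fold_right]. rewrite IHn. rewrite Nat.add_0_r. f_equal.
  apply sn_ext; intros; f_equal; lia.
Qed.

Lemma sum_n_sn (a : nat -> R) N : sum_n a N = sn a (S N).
Proof.
  induction N. rewrite sum_O; simpl; lra.
  rewrite sum_Sn, IHN. simpl. reflexivity.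
Qed.

Lemma sumf_sn (a : nat -> R) N : sum_f_R0 a N = sn a (S N).
Proof. induction N; simpl in *; [lra|]. rewrite IHN; reflexivity. Qed.

Lemma sumZ_sn a n f : sumZ a (a + Z.of_nat n - 1) f = sn (fun i => f (a + Z.of_nat i)%Z) n.
Proof.
  unfold sumZ. replace (Z.to_nat (a + Z.of_nat n - 1 - a + 1)) with n by lia.
  rewrite fold_sn. apply sn_ext. intros; reflexivity.
Qed.

Definition H (n : nat) : R := sn (fun i => / INR (S i)) n.
Definition B (n k : nat) : R := if (k <=? n)%nat then Binomial.C n k else 0.
Definition Bz (N : nat) (z : Z) : R := if (z <? 0)%Z then 0 else B N (Z.to_nat z).

Lemma B_0 n : B n 0 = 1.
Proof. unfold B; simpl. apply C_n_0. Qed.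

Lemma B_over n k : (n < k)%nat -> B n k = 0.
Proof. intros; unfold B. destruct (Nat.leb_spec k n); auto; lia. Qed.

Lemma B_pascal n k : B (S n) (S k) = B n k + B n (S k).
Proof.
  unfold B. destruct (Nat.leb_spec (S k) (S n)); destruct (Nat.leb_spec k n);
  destruct (Nat.leb_spec (S k) n); try lia.
  - rewrite pascal; auto. 
  - assert (k = n) by lia; subst. rewrite !C_n_n; lra.
  - lra.
Qed.

Lemma Bz_pascal N z : Bz (S N) z = Bz N (z - 1) + Bz N z.
Proof.
  unfold Bz. destruct (Z.ltb_spec z 0).
  - destruct (Z.ltb_spec (z-1) 0); try lia. lra.
  - destruct (Z.eq_dec z 0).
    + subst. simpl. rewrite !B_0; lra.
    + destruct (Z.ltb_spec (z-1) 0); try lia.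
      replace (Z.to_nat z) with (S (Z.to_nat (z-1))) by lia.
      rewrite B_pascal; lra.
Qed.

Lemma B_sym n k : (k <= n)%nat -> B n k = B n (n - k).
Proof.
  intros. unfold B. destruct (Nat.leb_spec k n); destruct (Nat.leb_spec (n-k) n); try lia.
  apply pascal_step1; auto.
Qed.

Lemma B_fact n k : (k <= n)%nat -> B n k = INR (fact n) / (INR (fact k) * INR (fact (n - k))).
Proof. intros; unfold B. destruct (Nat.leb_spec k n); try lia. reflexivity. Qed.

Lemma fact_pos n : 0 < INR (fact n).
Proof. apply lt_0_INR, lt_O_fact. Qed.

Lemma B_mul N i : INR (S i) * B (S N) (S i) = INR (S N) * B N i.
Proof.
  destruct (Nat.leb_spec i N).
  - rewrite !B_fact by lia. replace (S N - S i)%nat with (N - i)%nat by lia.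
    rewrite !fact_simpl. rewrite !mult_INR.
    pose proof (fact_pos i); pose proof (fact_pos (N-i)).
    field. repeat split; try lra. apply not_0_INR; lia.
  - rewrite !B_over by lia. lra.
Qed.

Lemma binom_y (y : R) p : (1 + y) ^ p = sn (fun m => B p m * y ^ (p - m)) (S p).
Proof.
  rewrite binomial, sumf_sn. apply sn_ext; intros.
  unfold B. destruct (Nat.leb_spec i p); try lia. rewrite pow1; lra.
Qed.

Lemma alt_zero M : sn (fun i => (-1)^i * B (S M) i) (S (S M)) = 0.
Proof.
  pose proof (binomial (-1) 1 (S M)) as Hb. rewrite sumf_sn in Hb.
  replace (-1 + 1) with 0 in Hb by lra. simpl (0 ^ S M) in Hb. rewrite Rmult_0_l in Hb.
  rewrite Hb. apply sn_ext; intros. unfold B. destruct (Nat.leb_spec i (S M)); try lia.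
  rewrite pow1; lra.
Qed.

Lemma alt_one N : sn (fun i => (-1)^i * B (S N) (S i)) (S N) = 1.
Proof.
  pose proof (alt_zero N) as Ha. rewrite sn_shift, B_0 in Ha.
  assert (E: sn (fun i => (-1)^(S i) * B (S N) (S i)) (S N) = - sn (fun i => (-1)^i * B (S N) (S i)) (S N)).
  { rewrite <- (Rmult_1_l (sn (fun i => (-1)^i * _) _)). rewrite Ropp_mult_distr_l, <- sn_scal.
    apply sn_ext; intros; simpl; ring. }
  simpl pow at 1 in Ha. lra.
Qed.

Lemma harm_alt N : sn (fun i => (-1)^i * B N (S i) / INR (S i)) N = H N.
Proof.
  induction N.
  - reflexivity.
  - assert (Hd : sn (fun i => (-1)^i * B (S N) (S i) / INR (S i)) (S N)
               = sn (fun i => (-1)^i * B N (S i) / INR (S i)) (S N)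
                 + / INR (S N) * sn (fun i => (-1)^i * B (S N) (S i)) (S N)).
    { rewrite <- sn_scal, <- sn_plus. apply sn_ext; intros.
      rewrite (B_pascal N i) at 1. pose proof (B_mul N i) as Hm.
      assert (INR (S i) <> 0) by (apply not_0_INR; lia).
      assert (INR (S N) <> 0) by (apply not_0_INR; lia).
      replace (B N i) with ((INR (S i) * B (S N) (S i))/ INR (S N)) by (rewrite Hm; field; auto).
      field; auto. }
    rewrite Hd, alt_one. cbn [sn]. rewrite (B_over N (S N)) by lia. rewrite IHN.
    unfold H; cbn [sn]. lra.
Qed.

Lemma harmA N : sn (fun r => (-1)^(N+r+1) * B N r / (INR N - INR r)) N = H N.
Proof.
  rewrite sn_rev, <- harm_alt. apply sn_ext; intros i Hi.
  replace (INR N - INR (N - S i)) with (INR (S i)) by (rewrite minus_INR by lia; rewrite S_INR; ring).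
  rewrite B_sym by lia. replace (N - (N - S i))%nat with (S i) by lia.
  replace (N + (N - S i) + 1)%nat with (i + 2 * (N - S i + 1))%nat by lia.
  rewrite pow_add, pow_mult. replace ((-1)^2) with 1 by ring. rewrite pow1, Rmult_1_r. reflexivity.
Qed.

Definition Q (y : R) (p : nat) (k : Z) : R :=
  sn (fun m => B p m * Bz (p + m) (k + Z.of_nat m) * y ^ (p - m)) (S p).

Lemma Q_rec y p k :
  Q y (S p) k = (1 + y) * Q y p (k - 1) + (2 + y) * Q y p k + Q y p (k + 1).
Proof.
  assert (E1 : Q y (S p) k = sn (fun m => B p m * y ^ (p - m) *
      (Bz (S (S (p + m))) (k + Z.of_nat m + 1) + y * Bz (S (p + m)) (k + Z.of_nat m))) (S p)).
  { unfold Q. rewrite sn_shift.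
    assert (A : sn (fun i => B (S p) (S i) * Bz (S p + S i) (k + Z.of_nat (S i)) * y ^ (S p - S i)) (S p)
      = sn (fun m => B p m * y ^ (p - m) * Bz (S (S (p + m))) (k + Z.of_nat m + 1)) (S p)
      + sn (fun m => B p (S m) * y ^ (p - m) * Bz (S (S (p + m))) (k + Z.of_nat m + 1)) (S p)).
    { rewrite <- sn_plus. apply sn_ext; intros i Hi. rewrite B_pascal.
      replace (S p + S i)%nat with (S (S (p + i))) by lia.
      replace (k + Z.of_nat (S i))%Z with (k + Z.of_nat i + 1)%Z by lia.
      replace (S p - S i)%nat with (p - i)%nat by lia. ring. }
    rewrite A; clear A.
    assert (Bp : sn (fun m => B p m * y ^ (p - m) * (y * Bz (S (p + m)) (k + Z.of_nat m))) (S p)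
      = B (S p) 0 * Bz (S p + 0) (k + Z.of_nat 0) * y ^ (S p - 0)
        + sn (fun m => B p (S m) * y ^ (p - m) * Bz (S (S (p + m))) (k + Z.of_nat m + 1)) (S p)).
    { transitivity (sn (fun m => B p m * Bz (S p + m) (k + Z.of_nat m) * y ^ (S p - m)) (S (S p))).
      - change (sn ?f (S (S p))) with (sn f (S p) + f (S p)). cbv beta. rewrite (B_over p (S p)) by lia. rewrite Rmult_0_l, Rmult_0_l, Rplus_0_r.
        apply sn_ext; intros i Hi. replace (S p - i)%nat with (S (p - i)) by lia.
        replace (S p + i)%nat with (S (p + i)) by lia. simpl pow. ring.
      - rewrite sn_shift. rewrite !B_0. f_equal. apply sn_ext; intros i Hi.
        replace (S p + S i)%nat with (S (S (p + i))) by lia.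
        replace (k + Z.of_nat (S i))%Z with (k + Z.of_nat i + 1)%Z by lia.
        replace (S p - S i)%nat with (p - i)%nat by lia. ring. }
    transitivity (sn (fun m => B p m * y ^ (p - m) * Bz (S (S (p + m))) (k + Z.of_nat m + 1)) (S p)
       + sn (fun m => B p m * y ^ (p - m) * (y * Bz (S (p + m)) (k + Z.of_nat m))) (S p)).
    { rewrite Bp; ring. }
    rewrite <- sn_plus. apply sn_ext; intros; ring. }
  rewrite E1. unfold Q. rewrite <- !sn_scal, <- !sn_plus. apply sn_ext; intros m Hm.
  rewrite !Bz_pascal.
  replace (k + Z.of_nat m + 1 - 1)%Z with (k + Z.of_nat m)%Z by lia.
  replace (k + Z.of_nat m - 1)%Z with (k - 1 + Z.of_nat m)%Z by lia.
  replace (k + Z.of_nat m + 1)%Z with (k + 1 + Z.of_nat m)%Z by lia.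
  ring.
Qed.

Lemma logR_Q t p k : 0 < t ->
  powerRZ t k * logR p k ((t + / t) / 2) = Q (t ^ 2 - 1) p k / (2 * t) ^ p.
Proof.
  intros Ht. revert k. induction p; intros k.
  - simpl. unfold Q. cbn [sn]. rewrite B_0. rewrite Z.add_0_r.
    unfold Bz. destruct (Z.eqb_spec k 0).
    + subst. simpl. rewrite B_0. field.
    + destruct (Z.ltb_spec k 0). field.
      rewrite B_over by lia. field.
  - cbn [logR].
    assert (P1 : powerRZ t k = t * powerRZ t (k - 1)).
    { replace k with ((k - 1) + 1)%Z at 1 by lia. rewrite powerRZ_add by lra. simpl; ring. }
    assert (P2 : powerRZ t k = / t * powerRZ t (k + 1)).
    { replace k with ((k + 1) + (-1))%Z at 1 by lia. rewrite powerRZ_add by lra. simpl. field. lra. }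
    transitivity (t / 2 * (powerRZ t (k-1) * logR p (k - 1) ((t + / t) / 2))
      + (t + / t) / 2 * (powerRZ t k * logR p k ((t + / t) / 2))
      + / (2 * t) * (powerRZ t (k + 1) * logR p (k + 1) ((t + / t) / 2))).
    { rewrite Rmult_plus_distr_l, Rmult_plus_distr_l.
      f_equal; [f_equal|]. rewrite P1; field. ring. rewrite P2. field. lra. }
    rewrite !IHp, Q_rec. simpl pow. field. split; [apply pow_nonzero|]; lra.
Qed.

Lemma m1_pow_eq a b c : (a + 2 * c = b)%nat -> (-1) ^ a = (-1) ^ b.
Proof. intros <-. rewrite pow_add, pow_mult. replace ((-1)^2) with 1 by ring. rewrite pow1; ring. Qed.

Lemma powerRZ_m1 (b c : nat) : powerRZ (-1) (Z.of_nat b - Z.of_nat c) = (-1) ^ (b + c).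
Proof.
  unfold Z.sub. rewrite powerRZ_add by lra. rewrite <- !pow_powerRZ.
  rewrite powerRZ_neg' by lra. rewrite <- pow_powerRZ. rewrite pow_add.
  f_equal. rewrite <- pow_inv. f_equal. field.
Qed.

Lemma inner_LHS p m : (m <= p)%nat ->
  sn (fun i => (-1) ^ (i + p + 1) * Bz (p + m) (- Z.of_nat p + Z.of_nat i + Z.of_nat m)
               / (INR (2 * p) - INR i)) (2 * p)
  = (-1) ^ p * H (p + m).
Proof.
  intros Hm. match goal with |- sn ?f (2*p)%nat = _ => replace (sn f (2*p)%nat) with (sn f ((p-m)+(p+m))%nat) by (f_equal; lia) end.
  rewrite sn_split. rewrite sn_zero.
  2: { intros i Hi. unfold Bz. destruct (Z.ltb_spec (- Z.of_nat p + Z.of_nat i + Z.of_nat m) 0); try lia. lra. }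
  rewrite Rplus_0_l, <- harmA, <- sn_scal. apply sn_ext; intros r Hr.
  replace (- Z.of_nat p + Z.of_nat (p - m + r) + Z.of_nat m)%Z with (Z.of_nat r) by lia.
  unfold Bz. destruct (Z.ltb_spec (Z.of_nat r) 0); try lia. rewrite Nat2Z.id.
  replace (INR (2 * p) - INR (p - m + r)) with (INR (p + m) - INR r).
  2: { rewrite !plus_INR, mult_INR, minus_INR by lia. simpl. ring. }
  rewrite (m1_pow_eq (p - m + r + p + 1) (p + (p + m + r + 1)) m) by lia.
  rewrite pow_add. unfold Rdiv. ring.
Qed.

Lemma exp_nat n a : exp (INR n * a) = exp a ^ n.
Proof.
  induction n. simpl. rewrite Rmult_0_l, exp_0; auto.
  rewrite S_INR, Rmult_plus_distr_r, Rmult_1_l, exp_plus, IHn. simpl; ring.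
Qed.

Lemma exp_IZR k a : exp (IZR k * a) = powerRZ (exp a) k.
Proof.
  destruct k.
  - simpl. rewrite Rmult_0_l, exp_0; auto.
  - simpl powerRZ. rewrite <- exp_nat. f_equal. f_equal. rewrite INR_IZR_INZ. f_equal. lia.
  - simpl powerRZ. rewrite <- exp_nat, <- exp_Ropp. f_equal. rewrite INR_IZR_INZ.
    replace (Z.of_nat (Pos.to_nat p)) with (Z.pos p) by lia. rewrite <- Pos2Z.opp_pos, opp_IZR. ring.
Qed.

Lemma LHS_core t p : 0 < t ->
  sn (fun i => powerRZ (-1) (- Z.of_nat p + Z.of_nat i + 1) * powerRZ t (- Z.of_nat p + Z.of_nat i)
       * logR p (- Z.of_nat p + Z.of_nat i) ((t + / t) / 2)
       / IZR (Z.of_nat p - (- Z.of_nat p + Z.of_nat i))) (2 * p)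
  = / (2 * t) ^ p * sn (fun m => B p m * (t ^ 2 - 1) ^ (p - m) * ((-1) ^ p * H (p + m))) (S p).
Proof.
  intros Ht.
  transitivity (/ (2 * t) ^ p * sn (fun i => sn (fun m => B p m * (t ^ 2 - 1) ^ (p - m) *
     ((-1) ^ (i + p + 1) * Bz (p + m) (- Z.of_nat p + Z.of_nat i + Z.of_nat m)
               / (INR (2 * p) - INR i))) (S p)) (2 * p)).
  { rewrite <- sn_scal. apply sn_ext; intros i Hi.
    rewrite (Rmult_assoc (powerRZ _ _)), logR_Q by auto.
    replace (- Z.of_nat p + Z.of_nat i + 1)%Z with (Z.of_nat (i + 1) - Z.of_nat p)%Z by lia.
    rewrite powerRZ_m1. replace (i + 1 + p)%nat with (i + p + 1)%nat by lia.
    replace (IZR (Z.of_nat p - (- Z.of_nat p + Z.of_nat i))) with (INR (2 * p) - INR i).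
    2: { rewrite !INR_IZR_INZ, <- minus_IZR. f_equal. lia. }
    unfold Q. unfold Rdiv. rewrite <- !sn_scal. match goal with |- ?a * (sn ?f ?n * ?b) * ?c = _ => transitivity ((a*b*c) * sn f n); [ring|] end. rewrite <- sn_scal.
    apply sn_ext; intros m Hm. ring. }
  f_equal. rewrite sn_swap. apply sn_ext; intros m Hm.
  rewrite sn_scal, inner_LHS by lia. reflexivity.
Qed.

Fixpoint f (n : nat) (k : R) : R :=
  match n with O => 1 | S m => f m k * (k + INR m + 1) * (k - INR m) end.

Lemma f_zero n k : (k < n)%nat -> f n (INR k) = 0.
Proof.
  induction n; intros Hk; [lia|]. simpl.
  destruct (Nat.eq_dec k n). subst. ring. rewrite IHn by lia. ring.
Qed.

Lemma f_shift n k : f n (k + 1) * (k - INR n + 1) = f n k * (k + INR n + 1).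
Proof.
  induction n; cbn [f]. simpl (INR 0); ring.
  rewrite S_INR. transitivity (f n (k + 1) * (k - INR n + 1) * (k + INR n + 2) * (k - INR n)).
  ring. rewrite IHn. ring.
Qed.

Lemma poch_f n k : poch (- k) n * poch (k + 1) n = (-1) ^ n * f n k.
Proof.
  induction n; cbn [f poch]. ring.
  transitivity (poch (- k) n * poch (k + 1) n * ((- k + INR n) * (k + 1 + INR n))). ring.
  rewrite IHn. cbn [pow]. ring.
Qed.

Lemma ffall p m : (m <= p)%nat ->
  f m (INR p) = poch (1 + INR p) m * INR (fact m) * B p m.
Proof.
  intros Hm. rewrite B_fact by auto.
  assert (G : forall m, (m <= p)%nat -> f m (INR p) * INR (fact (p - m)) = poch (1 + INR p) m * INR (fact p)).
  { clear m Hm. induction m; intros Hm. simpl. rewrite Nat.sub_0_r; ring.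
    cbn [f poch].
    replace (p - m)%nat with (S (p - S m)) in IHm by lia. rewrite fact_simpl, mult_INR in IHm.
    replace (INR (S (p - S m))) with (INR p - INR m) in IHm by (rewrite S_INR, minus_INR by lia; rewrite S_INR; ring).
    transitivity (poch (1 + INR p) m * INR (fact p) * (INR p + INR m + 1)).
    rewrite <- IHm by lia. ring. ring. }
  pose proof (G m Hm) as Gm. pose proof (fact_pos (p - m)). pose proof (fact_pos m).
  apply (Rmult_eq_reg_r (INR (fact (p - m)))); [|lra]. rewrite Gm. field. lra.
Qed.

Lemma E_sum n p : sn (fun k => (-1) ^ k * (2 * INR k + 1) * f n (INR k)) p
   = (-1) ^ (p + 1) * (INR p - INR n) * f n (INR p).
Proof.
  induction p.
  - simpl. destruct n. simpl; ring. change (f (S n) 0) with (f (S n) (INR 0)). rewrite (f_zero (S n) 0) by lia. ring.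
  - simpl sn. rewrite IHp. rewrite S_INR.
    transitivity ((-1) ^ p * (f n (INR p) * (INR p + INR n + 1))).
    { simpl pow. rewrite Nat.add_1_r. simpl pow. ring. }
    rewrite <- f_shift. replace (S p + 1)%nat with (p + 2)%nat by lia. rewrite pow_add. simpl pow. ring.
Qed.

Lemma sn_minus f g n : sn (fun i => f i - g i) n = sn f n - sn g n.
Proof. induction n; simpl; [lra|]. rewrite IHn; lra. Qed.

Definition Alt (n : nat) : R := sn (fun j => (-1) ^ j / INR (S j)) n.

Lemma Alt_H p : Alt (2 * p) = H (2 * p) - H p.
Proof.
  induction p. unfold Alt, H; simpl; ring.
  replace (2 * S p)%nat with (S (S (2 * p))) by lia. unfold Alt, H in *. cbn [sn].
  rewrite IHp. change ((-1)^S(2*p)) with (-1 * (-1)^(2*p)). rewrite !pow_mult. replace ((-1)^2) with 1 by ring. rewrite pow1.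
  rewrite !S_INR, mult_INR. change (INR 2) with 2. field.
  split; [|split]; apply Rgt_not_eq; apply Rlt_gt; pose proof (pos_INR p); lra.
Qed.

Lemma S0_sum p : sn (fun k => (-1) ^ k * (2 * INR k + 1) / ((INR p - INR k) * (INR p + INR k + 1))) p
   = (-1) ^ (p + 1) * (H (2 * p) - H p).
Proof.
  assert (U : sn (fun k => (-1) ^ k / (INR p - INR k)) p = (-1) ^ (p + 1) * Alt p).
  { unfold Alt. rewrite sn_rev, <- sn_scal. apply sn_ext; intros j Hj.
    replace (INR p - INR (p - S j)) with (INR (S j)) by (rewrite minus_INR by lia; rewrite !S_INR; ring).
    rewrite (m1_pow_eq (p - S j) (p + 1 + j) (S j)) by lia. rewrite pow_add. unfold Rdiv; ring. }
  assert (V : Alt (2 * p) = Alt p + (-1) ^ p * sn (fun k => (-1) ^ k / (INR p + INR k + 1)) p).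
  { unfold Alt. replace (2 * p)%nat with (p + p)%nat by lia. rewrite sn_split. f_equal.
    rewrite <- sn_scal. apply sn_ext; intros. rewrite pow_add, S_INR, plus_INR. unfold Rdiv; ring. }
  rewrite Alt_H in V.
  transitivity (sn (fun k => (-1) ^ k / (INR p - INR k)) p - sn (fun k => (-1) ^ k / (INR p + INR k + 1)) p).
  { rewrite <- sn_minus. apply sn_ext; intros k Hk.
    assert (INR k < INR p) by (apply lt_INR; auto). pose proof (pos_INR k).
    field. lra. }
  rewrite U.
  assert (E : sn (fun k => (-1) ^ k / (INR p + INR k + 1)) p = (-1) ^ p * (H (2 * p) - H p - Alt p)).
  { assert (Sq : (-1)^p * (-1)^p = 1).
    { rewrite <- pow_add, (m1_pow_eq (p + p) (2 * p) 0) by lia. rewrite pow_mult.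
      replace ((-1)^2) with 1 by ring. rewrite pow1. ring. }
    rewrite V. transitivity ((-1)^p * (-1)^p * sn (fun k => (-1) ^ k / (INR p + INR k + 1)) p).
    rewrite Sq; ring. ring. }
  rewrite E. rewrite pow_add. simpl pow. ring.
Qed.

Lemma S_sum n p :
  sn (fun k => (-1) ^ k * (2 * INR k + 1) / ((INR p - INR k) * (INR p + INR k + 1)) * f n (INR k)) p
  = (-1) ^ (p + 1) * f n (INR p) * (H (2 * p) - H (p + n)).
Proof.
  induction n.
  - cbn [f]. rewrite Nat.add_0_r. rewrite Rmult_1_r, <- S0_sum. apply sn_ext; intros; ring.
  - transitivity ((INR p - INR n) * (INR p + INR n + 1) *
       sn (fun k => (-1) ^ k * (2 * INR k + 1) / ((INR p - INR k) * (INR p + INR k + 1)) * f n (INR k)) p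
       - sn (fun k => (-1) ^ k * (2 * INR k + 1) * f n (INR k)) p).
    { rewrite <- sn_scal, <- sn_minus. apply sn_ext; intros k Hk. cbn [f].
      assert (INR k < INR p) by (apply lt_INR; auto). pose proof (pos_INR k).
      field. lra. }
    rewrite IHn, E_sum.
    replace (p + S n)%nat with (S (p + n)) by lia. assert (HS : H (S (p + n)) = H (p + n) + / INR (S (p + n))) by reflexivity.
    rewrite HS. cbn [f]. rewrite S_INR, plus_INR. pose proof (pos_INR p); pose proof (pos_INR n).
    field. lra.
Qed.

Lemma RHS_sum t p : 1 < t ->
  INR (fact p) * t ^ p * ((t ^ 2 - 1) / (2 * t)) ^ p *
  sn (fun k => (-1) ^ k * (2 * INR k + 1) / ((INR p - INR k) * (INR p + INR k + 1)) *
     (/ INR (fact p) * (/ t) ^ p *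
      sn (fun m => poch (- INR k) m * poch (INR k + 1) m / (poch (1 + INR p) m * INR (fact m))
                   * (- / (t ^ 2 - 1)) ^ m) (S p))) p
  = / (2 * t) ^ p * sn (fun m => B p m * (t ^ 2 - 1) ^ (p - m) *
                         ((-1) ^ (p + 1) * (H (2 * p) - H (p + m)))) (S p).
Proof.
  intros Ht.
  assert (Hy : 0 < t ^ 2 - 1) by nra.
  assert (Hpo : forall m, 0 < poch (1 + INR p) m).
  { induction m; simpl. lra. pose proof (pos_INR p); pose proof (pos_INR m). nra. }
  transitivity (/ (2 * t) ^ p * sn (fun k => sn (fun m =>
      (-1) ^ k * (2 * INR k + 1) / ((INR p - INR k) * (INR p + INR k + 1)) * f m (INR k)
      * ((t ^ 2 - 1) ^ (p - m) / (poch (1 + INR p) m * INR (fact m)))) (S p)) p).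
  { rewrite <- sn_scal. rewrite <- sn_scal. apply sn_ext; intros k Hk.
    rewrite <- !sn_scal. apply sn_ext; intros m Hm.
    rewrite poch_f.
    assert (E : ((t ^ 2 - 1) / (2 * t)) ^ p * (-1) ^ m * (- / (t ^ 2 - 1)) ^ m = (t ^ 2 - 1) ^ (p - m) / (2 * t) ^ p).
    { rewrite Rmult_assoc, <- Rpow_mult_distr.
      replace (-1 * - / (t ^ 2 - 1)) with (/ (t ^ 2 - 1)) by (field; lra).
      unfold Rdiv. rewrite Rpow_mult_distr.
      assert (Ep : (t^2-1)^p = (t^2-1)^(p-m) * (t^2-1)^m) by (rewrite <- pow_add; f_equal; lia).
      rewrite Ep. rewrite <- !Rinv_pow by lra. field. split; apply pow_nonzero; lra. }
    pose proof (fact_pos p) as F1. pose proof (fact_pos m) as F2. pose proof (Hpo m) as F3.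
    transitivity (INR (fact p) * / INR (fact p) * (t ^ p * (/ t) ^ p) *
       ((-1) ^ k * (2 * INR k + 1) / ((INR p - INR k) * (INR p + INR k + 1))) *
       (f m (INR k) / (poch (1 + INR p) m * INR (fact m))) *
       (((t ^ 2 - 1) / (2 * t)) ^ p * (-1) ^ m * (- / (t ^ 2 - 1)) ^ m)).
    { assert (INR k < INR p) by (apply lt_INR; auto). pose proof (pos_INR k). field. repeat split; try lra. }
    rewrite E, <- Rpow_mult_distr, (Rinv_r t) by lra. rewrite pow1.
    assert (INR k < INR p) by (apply lt_INR; auto). pose proof (pos_INR k).
    field. repeat split; try lra; apply pow_nonzero; lra. }
  f_equal. rewrite sn_swap. apply sn_ext; intros m Hm.
  transitivity ((t ^ 2 - 1) ^ (p - m) / (poch (1 + INR p) m * INR (fact m)) *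
     sn (fun k => (-1) ^ k * (2 * INR k + 1) / ((INR p - INR k) * (INR p + INR k + 1)) * f m (INR k)) p).
  { rewrite <- sn_scal. apply sn_ext; intros; ring. }
  rewrite S_sum, ffall by lia.
  pose proof (fact_pos m) as F2. pose proof (Hpo m) as F3. field. lra.
Qed.

Lemma lim_inv_shift c : is_lim_seq (fun K => / INR (K + S c)) 0.
Proof.
  assert (L : is_lim_seq (fun K => INR (K + S c)) p_infty).
  { apply (is_lim_seq_incr_n INR (S c)). apply is_lim_seq_INR. }
  apply is_lim_seq_inv in L; [|discriminate]. exact L.
Qed.

Lemma lim_tail M : is_lim_seq (fun K => sn (fun i => / INR (K + S i)) M) 0.
Proof.
  induction M.
  - simpl. apply is_lim_seq_const.
  - simpl. replace (Finite 0) with (Finite (0 + 0)) by (f_equal; ring).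
    apply is_lim_seq_plus'; auto. apply lim_inv_shift.
Qed.

Lemma tele M K : sn (fun n => / (INR n + 1) - / (INR n + INR M + 1)) K
  = H M - sn (fun i => / INR (K + S i)) M.
Proof.
  induction K.
  - cbn [sn]. unfold H. change (fun i => / INR (0 + S i)) with (fun i => / INR (S i)). ring.
  - cbn [sn]. rewrite IHK.
    assert (Sh : sn (fun i => / INR (S K + S i)) M = sn (fun i => / INR (K + S i)) M
                 + / INR (K + S M) - / INR (K + 1)).
    { pose proof (sn_shift (fun i => / INR (K + S i)) M) as A. cbn [sn] in A.
      rewrite (sn_ext (fun i => / INR (S K + S i)) (fun i => / INR (K + S (S i)))) by (intros; f_equal; f_equal; lia).
      replace (K + 1)%nat with (K + S 0)%nat by lia. lra. }
    rewrite Sh. rewrite !plus_INR, !S_INR. simpl (INR 0). replace (0+1) with 1 by ring. replace (INR K + (INR M + 1)) with (INR K + INR M + 1) by ring. ring.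
Qed.

Lemma series_of_lim (a : nat -> R) (l : R) : is_lim_seq (sum_n a) l -> Series a = l.
Proof. intros Hl. apply is_series_unique. exact Hl. Qed.

Lemma digamma_diff M : digamma (INR M + 1) - digamma 1 = H M.
Proof.
  unfold digamma.
  assert (S1 : Series (fun n => / (INR n + 1) - / (INR n + 1)) = 0).
  { apply series_of_lim. apply (is_lim_seq_ext (fun _ => 0)). 2: apply is_lim_seq_const.
    intros n. rewrite sum_n_sn. symmetry. apply sn_zero. intros; ring. }
  assert (S2 : Series (fun n => / (INR n + 1) - / (INR n + (INR M + 1))) = H M).
  { apply series_of_lim.
    apply (is_lim_seq_ext (fun K => H M - sn (fun i => / INR (S K + S i)) M)).
    - intros K. rewrite sum_n_sn, <- tele. apply sn_ext; intros.
      replace (INR i + (INR M + 1)) with (INR i + INR M + 1) by ring. reflexivity.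
    - replace (Finite (H M)) with (Finite (H M - 0)) by (f_equal; ring).
      apply is_lim_seq_minus'. apply is_lim_seq_const.
      apply (is_lim_seq_incr_1 (fun K => sn (fun i => / INR (K + S i)) M)). apply lim_tail. }
  rewrite S1, S2. ring.
Qed.

Lemma sum_eventually (a : nat -> R) N : (forall n, (N < n)%nat -> a n = 0) -> Series a = sn a (S N).
Proof.
  intros Hz. apply series_of_lim. apply (is_lim_seq_ext_loc (fun _ => sn a (S N))).
  - exists N. intros n Hn. rewrite sum_n_sn.
    replace (S n) with (S N + (n - N))%nat by lia. rewrite sn_split.
    rewrite (sn_zero (fun i => a (S N + i)%nat)). ring. intros; apply Hz; lia.
  - apply is_lim_seq_const.
Qed.

Lemma sn_shift_last (g : nat -> R) n : sn g (S n) = sn g n + g n.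
Proof. reflexivity. Qed.

Lemma legendre_deriv p z : Derive_n (legendreP p) p z = INR (fact (2 * p)) / (INR (fact p) * 2 ^ p).
Proof.
  set (g := fun k y => Binomial.C p k * Binomial.C (p + k) k * ((y - 1) / 2) ^ k).
  assert (Eg : forall k y, g k y = (Binomial.C p k * Binomial.C (p + k) k * (/ 2) ^ k) * (fun u => u ^ k) (y + -1)).
  { intros; unfold g. unfold Rdiv. rewrite Rpow_mult_distr. cbv beta. replace (y + -1) with (y - 1) by ring. ring. }
  rewrite (Derive_n_ext (legendreP p) (fun x => sum_n (fun k => g k x) p)) by (intros; unfold legendreP, g; reflexivity).
  rewrite (Derive_n_sum_n p g p z).
  2: { exists (mkposreal _ Rlt_0_1). intros t _ l j _ _. 
       apply (ex_derive_n_ext (fun y => (Binomial.C p l * Binomial.C (p + l) l * (/ 2) ^ l) * (fun u => u ^ l) (y + -1)) (g l)).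
       { intros; rewrite Eg; reflexivity. }
       apply (ex_derive_n_scal_l (fun y => (fun u => u ^ l) (y + -1))).
       apply (ex_derive_n_comp_trans (fun u => u ^ l)). apply ex_derive_n_pow. }
  assert (Dg : forall k, Derive_n (g k) p z = (Binomial.C p k * Binomial.C (p + k) k * (/ 2) ^ k)
      * (if le_dec p k then INR (fact k) / INR (fact (k - p)) * (z + -1) ^ (k - p) else 0)).
  { intros k. rewrite (Derive_n_ext (g k) (fun y => (Binomial.C p k * Binomial.C (p + k) k * (/ 2) ^ k) * (fun u => u ^ k) (y + -1))).
    2: { intros; rewrite Eg; reflexivity. }
    rewrite (Derive_n_scal_l (fun y => (fun u => u ^ k) (y + -1))).
    rewrite (Derive_n_comp_trans (fun u => u ^ k)). rewrite Derive_n_pow. reflexivity. }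
  rewrite sum_n_sn. rewrite (sn_shift_last (fun j => Derive_n (g j) p z) p).
  rewrite sn_zero.
  2: { intros k Hk. rewrite Dg. destruct (le_dec p k); [lia|]. ring. }
  rewrite Dg. destruct (le_dec p p); [|lia]. rewrite Nat.sub_diag. rewrite !pow_O.
  rewrite C_n_n. unfold Binomial.C. replace (p + p - p)%nat with p by lia.
  replace (p + p)%nat with (2 * p)%nat by lia.
  pose proof (fact_pos p). rewrite <- Rinv_pow by lra. change (INR (fact 0)) with 1. field.
  split; [apply pow_nonzero|]; lra.
Qed.

Lemma Rpower_sq_half a n : 0 < a -> Rpower (a ^ 2) (INR n / 2) = a ^ n.
Proof.
  intros Ha. replace (a ^ 2) with (Rpower a (INR 2)) by (apply Rpower_pow; auto).
  rewrite Rpower_mult. replace (INR 2 * (INR n / 2)) with (INR n) by (simpl; field).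
  apply Rpower_pow; auto.
Qed.

Lemma poch_zero k n : (k < n)%nat -> poch (- INR k) n = 0.
Proof.
  induction n; intros Hk; [lia|]. simpl.
  destruct (Nat.eq_dec k n). subst. ring. rewrite IHn by lia. ring.
Qed.

Lemma s_pos t (Ht : 1 < t) : 0 < ((t - / t) / 2).
Proof. replace ((t - / t) / 2) with ((t ^ 2 - 1) / (2 * t)) by (field; lra). apply Rdiv_lt_0_compat; nra. Qed.

Lemma pp_piece t (Ht : 1 < t) p : assocP_pp p (((t + / t) / 2) / ((t - / t) / 2)) = (/ ((t - / t) / 2)) ^ p * (INR (fact (2 * p)) / (INR (fact p) * 2 ^ p)).
Proof.
  unfold assocP_pp. rewrite legendre_deriv. f_equal.
  replace ((((t + / t) / 2) / ((t - / t) / 2)) ^ 2 - 1) with ((/ ((t - / t) / 2)) ^ 2).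
  - apply Rpower_sq_half. apply Rinv_0_lt_compat, s_pos; auto.
  - field. split; nra.
Qed.

Lemma neg_piece t (Ht : 1 < t) k p : (k < p)%nat ->
  assocP_neg k p (((t + / t) / 2) / ((t - / t) / 2)) = / INR (fact p) * (/ t) ^ p *
      sn (fun m => poch (- INR k) m * poch (INR k + 1) m / (poch (1 + INR p) m * INR (fact m))
                   * (- / (t ^ 2 - 1)) ^ m) (S p).
Proof.
  intros Hk. unfold assocP_neg. f_equal. f_equal.
  - replace (((((t + / t) / 2) / ((t - / t) / 2)) - 1) / ((((t + / t) / 2) / ((t - / t) / 2)) + 1)) with ((/ t) ^ 2).
    + apply Rpower_sq_half. apply Rinv_0_lt_compat; lra.
    + field. repeat split; nra.
  - unfold hyp2F1. etransitivity; [apply (sum_eventually _ p)|].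
    + intros n Hn. rewrite poch_zero by lia. unfold Rdiv. ring.
    + apply sn_ext; intros m Hm. f_equal. f_equal. field. repeat split; nra.
Qed.

Lemma final_comb t p : 1 < t ->
  / (2 * t) ^ p * sn (fun m => B p m * (t ^ 2 - 1) ^ (p - m) * ((-1) ^ p * H (p + m))) (S p)
  = (-1) ^ p * H (2 * p) * t ^ p / 2 ^ p
    + / (2 * t) ^ p * sn (fun m => B p m * (t ^ 2 - 1) ^ (p - m) *
                         ((-1) ^ (p + 1) * (H (2 * p) - H (p + m)))) (S p).
Proof.
  intros Ht.
  assert (E : (-1) ^ p * H (2 * p) * t ^ p / 2 ^ p
     = / (2 * t) ^ p * sn (fun m => B p m * (t ^ 2 - 1) ^ (p - m) * ((-1) ^ p * H (2 * p))) (S p)).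
  { transitivity (/ (2 * t) ^ p * ((-1) ^ p * H (2 * p)) * (1 + (t ^ 2 - 1)) ^ p).
    - replace (1 + (t ^ 2 - 1)) with (t * t) by ring. rewrite !Rpow_mult_distr.
      field. split; apply pow_nonzero; lra.
    - rewrite binom_y. rewrite Rmult_assoc. f_equal. rewrite <- sn_scal.
      apply sn_ext; intros; ring. }
  rewrite E, <- Rmult_plus_distr_l, <- sn_plus. f_equal. apply sn_ext; intros.
  rewrite pow_add. ring.
Qed.

Theorem mainTheorem4 (p : nat) (eta : R) (Heta : 0 < eta) :
  let x := cosh eta in
  let cth := cosh eta / sinh eta in
  sumZ (- Z.of_nat p) (Z.of_nat p - 1)
    (fun k => powerRZ (-1) (k + 1) * exp (IZR k * eta) * logR p k x
              / IZR (Z.of_nat p - k))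
  = INR (fact p) * exp (INR p * eta) * sinh eta ^ p *
    ( (-1) ^ p / INR (fact (2 * p)) * (digamma (INR (2 * p + 1)) - digamma 1)
        * assocP_pp p cth
      + sumZ 0 (Z.of_nat p - 1)
          (fun k => powerRZ (-1) k * (2 * IZR k + 1)
                    / (IZR (Z.of_nat p - k) * IZR (Z.of_nat p + k + 1))
                    * assocP_neg (Z.to_nat k) p cth) ).
Proof.
  intros x cth. unfold x, cth. clear x cth.
  assert (Ht : 1 < exp eta) by (rewrite <- exp_0; apply exp_increasing; lra).
  assert (Ec : cosh eta = (exp eta + / exp eta) / 2) by (unfold cosh; rewrite exp_Ropp; reflexivity).
  assert (Es : sinh eta = (exp eta - / exp eta) / 2) by (unfold sinh; rewrite exp_Ropp; reflexivity).
  rewrite Ec, Es. rewrite exp_nat.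
  set (t := exp eta) in *.
  replace (Z.of_nat p - 1)%Z with (- Z.of_nat p + Z.of_nat (2 * p) - 1)%Z at 1 by lia.
  rewrite sumZ_sn.
  rewrite (sn_ext _ (fun i => powerRZ (-1) (- Z.of_nat p + Z.of_nat i + 1) * powerRZ t (- Z.of_nat p + Z.of_nat i)
       * logR p (- Z.of_nat p + Z.of_nat i) ((t + / t) / 2)
       / IZR (Z.of_nat p - (- Z.of_nat p + Z.of_nat i)))).
  2: { intros i Hi. rewrite exp_IZR. reflexivity. }
  rewrite LHS_core by lra.
  replace (Z.of_nat p - 1)%Z with (0 + Z.of_nat p - 1)%Z by lia.
  assert (R2 : sumZ 0 (0 + Z.of_nat p - 1) (fun k => powerRZ (-1) k * (2 * IZR k + 1)
                    / (IZR (Z.of_nat p - k) * IZR (Z.of_nat p + k + 1))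
                    * assocP_neg (Z.to_nat k) p (((t + / t) / 2) / ((t - / t) / 2)))
     = sn (fun k => (-1) ^ k * (2 * INR k + 1) / ((INR p - INR k) * (INR p + INR k + 1)) *
     (/ INR (fact p) * (/ t) ^ p *
      sn (fun m => poch (- INR k) m * poch (INR k + 1) m / (poch (1 + INR p) m * INR (fact m))
                   * (- / (t ^ 2 - 1)) ^ m) (S p))) p).
  { rewrite sumZ_sn. apply sn_ext. intros k Hk. rewrite Z.add_0_l, Nat2Z.id, neg_piece by auto.
    rewrite <- pow_powerRZ, <- INR_IZR_INZ, minus_IZR, !plus_IZR, <- !INR_IZR_INZ. reflexivity. }
  rewrite R2.
  rewrite pp_piece by auto.
  rewrite plus_INR, digamma_diff.
  replace ((t - / t) / 2) with ((t ^ 2 - 1) / (2 * t)) by (field; lra).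
  rewrite Rmult_plus_distr_l, RHS_sum by auto.
  rewrite final_comb by auto. f_equal.
  pose proof (fact_pos p). pose proof (fact_pos (2 * p)).
  assert (0 < (t ^ 2 - 1) / (2 * t)) by (apply Rdiv_lt_0_compat; nra).
  rewrite <- Rinv_pow by lra.
  field. repeat split; try lra; apply pow_nonzero; lra.
Qed.
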